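(* For every $\alpha$ with $5\pi/6<\alpha<2\pi$ there exist $R>0$ and a finite set $V$ of pairwise distinct points in the plane such that, when the radius levels $r_1<\dots<r_k=R$ include every pairwise distance $d(u,v)\le R$ between nodes of $V$, the graph $G_R$ is connected but $G_\alpha$ is not connected. In particular, for $\alpha>5\pi/6$, $G_\alpha$ does not in general preserve the connectivity of $G_R$.
   Context: Let $V$ be a finite set of pairwise distinct points (nodes) in the Euclidean plane, $d$ the Euclidean distance, and $R>0$. Let $G_R=(V,E)$ be the undirected graph with $E=\{\{u,v\}: u\neq v,\ d(u,v)\le R\}$. Fix a finite increasing sequence of radius levels $0<r_1<r_2<\dots<r_k=R$. For $u\in V$ and $1\le i\le k$ let $S_i(u)=\{v\in V\setminus\{u\}: d(u,v)\le r_i\}$. For $0<\alpha<2\pi$, a closed cone of width $\alpha$ with apex $u$ is a set $\{u+t(\cos\varphi,\sin\varphi): t\ge 0,\ \varphi\in[\theta-\alpha/2,\theta+\alpha/2]\}$ for some $\theta$. A finite set $S\subseteq V\setminus\{u\}$ has an $\alpha$-gap (at $u$) if some closed cone of width $\alpha$ with apex $u$ contains no node of $S$ (in particular $\emptyset$ has an $\alpha$-gap). The algorithm CBTC($\alpha$) assigns to each $u$ the index $i_u$ = the least $i\in\{1,\dots,k\}$ such that $S_i(u)$ has no $\alpha$-gap, or $i_u=k$ if there is no such $i$; set $N_\alpha(u)=S_{i_u}(u)$ and $N_\alpha=\{(u,v): v\in N_\alpha(u)\}$. Let $E_\alpha=\{\{u,v\}: (u,v)\in N_\alpha \text{ or }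 (v,u)\in N_\alpha\}$ (the symmetric closure of $N_\alpha$) and $G_\alpha=(V,E_\alpha)$. *)

(* Defs.v *)
From Stdlib Require Import Reals List Relations.
Import ListNotations.
Open Scope R_scope.

Definition point := (R * R)%type.

Definition edist (p q : point) : R :=
  sqrt ((fst p - fst q) ^ 2 + (snd p - snd q) ^ 2).

Definition in_cone (u : point) (theta alpha : R) (v : point) : Prop :=
  exists t phi, 0 <= t /\ theta - alpha / 2 <= phi <= theta + alpha / 2 /\
    v = (fst u + t * cos phi, snd u + t * sin phi).

Definition has_gap (alpha : R) (u : point) (S : point -> Prop) : Prop :=
  exists theta, forall v, S v -> ~ in_cone u theta alpha v.

Definition ball_nbrs (V : list point) (r : R) (u : point) (v : point) : Prop :=
  In v V /\ v <> u /\ edist u v <= r.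

(* radius levels r_1 < ... < r_k = Rad, stored as list rs with r_{i+1} = nth i rs 0 *)
Definition radius_levels (rs : list R) (Rad : R) : Prop :=
  rs <> [] /\ 0 < nth 0 rs 0 /\
  (forall i, (S i < length rs)%nat -> nth i rs 0 < nth (S i) rs 0) /\
  nth (length rs - 1) rs 0 = Rad.

Definition cbtc_index (V : list point) (rs : list R) (alpha : R) (u : point) (i : nat) : Prop :=
  (i < length rs)%nat /\
  ( (~ has_gap alpha u (ball_nbrs V (nth i rs 0) u) /\
      forall j, (j < i)%nat -> has_gap alpha u (ball_nbrs V (nth j rs 0) u))
  \/ ((forall j, (j < length rs)%nat -> has_gap alpha u (ball_nbrs V (nth j rs 0) u)) /\
      i = (length rs - 1)%nat) ).

Definition N_alpha (V : list point) (rs : list R) (alpha : R) (u v : point) : Prop :=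
  In u V /\ exists i, cbtc_index V rs alpha u i /\ ball_nbrs V (nth i rs 0) u v.

Definition E_alpha (V : list point) (rs : list R) (alpha : R) (u v : point) : Prop :=
  N_alpha V rs alpha u v \/ N_alpha V rs alpha v u.

Definition E_R (V : list point) (Rad : R) (u v : point) : Prop :=
  In u V /\ In v V /\ u <> v /\ edist u v <= Rad.

Definition connected_on (V : list point) (E : point -> point -> Prop) : Prop :=
  forall u v, In u V -> In v V -> clos_refl_trans point E u v.

(* Main.v *)
Require Import Defs.
From Stdlib Require Import Reals List Relations Lra Lia ZArith Psatz.
Import ListNotations.
Open Scope R_scope.

Definition rr (c : R) : R := 3/4 + c/2.
Definition ss (c : R) : R := rr c * (rr c - 2*c) / 4.
Definition Ul (c sn : R) : list point :=
  [(0,0); (rr c * c, rr c * sn); (0, - ss c); (- rr c, 0)].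
Definition Wl (c sn : R) : list point :=
  [(1,0); (1 - rr c * c, - (rr c * sn)); (1, ss c); (1 + rr c, 0)].

Lemma edist_gt1 p q : 1 < (fst p - fst q)^2 + (snd p - snd q)^2 -> 1 < edist p q.
Proof. intros H. unfold edist. rewrite <- sqrt_1. apply sqrt_lt_1; lra. Qed.

Lemma cross c sn : c < 1/2 -> -1 <= c -> 0 < sn -> sn <= 1 -> c*c + sn*sn = 1 ->
  forall x y, In x (Ul c sn) -> In y (Wl c sn) ->
  (x = (0,0) /\ y = (1,0)) \/ 1 < edist x y.
Proof.
intros H1 H2 H3 H4 H5 x y Hx Hy.
unfold Ul, Wl, ss in *. set (r := rr c) in *.
assert (Hr : 0 < r < 1) by (unfold r, rr; lra).
set (g := r - 2 * c).
assert (Hg : 0 < g) by (unfold g, r, rr; lra).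
assert (Hrc : r * r - 2 * r * c = r * g) by (unfold g; ring).
assert (Hrg : 0 < r * g) by nra.
assert (Hrs : r * (r * g / 4) * sn <= r * (r * g / 4)) by (assert (0 < r * (r*g/4)) by nra; nra).
assert (Hrrg : r * (r * g) < r * g) by nra.
assert (Hrc2 : r * c < 1/2) by (destruct (Rle_lt_dec 0 c); nra).
assert (Hsq : (r*c)^2 + (r*sn)^2 = r*r) by nra.
simpl in Hx, Hy.
destruct Hx as [<-|[<-|[<-|[<-|[]]]]]; destruct Hy as [<-|[<-|[<-|[<-|[]]]]];
  try (left; split; reflexivity); right; apply edist_gt1; simpl; fold g; nra.
Qed.
Lemma cosZ x (k:Z) : cos (x + 2 * IZR k * PI) = cos x /\ sin (x + 2 * IZR k * PI) = sin x.
Proof.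
destruct k as [|p|p].
- simpl. replace (x + 2*0*PI) with x by ring. auto.
- rewrite <- (positive_nat_Z p), <- INR_IZR_INZ. split; [apply cos_period|apply sin_period].
- rewrite IZR_NEG, <- (positive_nat_Z p), <- INR_IZR_INZ.
  set (y := x + 2 * - INR (Pos.to_nat p) * PI).
  assert (E : x = y + 2 * INR (Pos.to_nat p) * PI) by (unfold y; ring).
  split; [replace (cos x) with (cos (y + 2 * INR (Pos.to_nat p) * PI)) by (rewrite <- E; auto); symmetry; apply cos_period | replace (sin x) with (sin (y + 2 * INR (Pos.to_nat p) * PI)) by (rewrite <- E; auto); symmetry; apply sin_period].
Qed.

Lemma reduce x : exists k : Z, - (PI/2) <= x + 2 * IZR k * PI < 3 * (PI/2).
Proof.
assert (HP := PI_RGT_0).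
set (y := (x + PI/2) / (2*PI)).
destruct (base_Int_part y) as [H1 H2].
exists (- Int_part y)%Z. rewrite opp_IZR.
set (n := IZR (Int_part y)) in *.
assert (Hy : x + PI/2 = y * (2*PI)) by (unfold y; field; lra).
split; nra.
Qed.

Lemma cone_pt p th al t ph (k : Z) : 0 <= t ->
  th - al/2 <= ph + 2 * IZR k * PI <= th + al/2 ->
  in_cone p th al (fst p + t * cos ph, snd p + t * sin ph).
Proof.
intros Ht Hk. exists t, (ph + 2 * IZR k * PI).
destruct (cosZ ph k) as [C S]. rewrite C, S. auto.
Qed.

Definition psi (al : R) := al/2 - PI/12.

Lemma cover p be al r s th : 5*PI/6 < al -> 0 <= r -> 0 <= s ->
  in_cone p th al (fst p + r * cos (psi al + be), snd p + r * sin (psi al + be)) \/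
  in_cone p th al (fst p + s * cos (be - PI/2), snd p + s * sin (be - PI/2)) \/
  in_cone p th al (fst p + r * cos (be + PI), snd p + r * sin (be + PI)).
Proof.
intros Hal Hr Hs. assert (HP := PI_RGT_0). unfold psi in *.
destruct (reduce (th - be)) as [k [K1 K2]].
set (x := th - be + 2 * IZR k * PI) in *.
destruct (Rle_lt_dec x (- (PI/2) + al/2)) as [C1|C1].
{ right; left. apply cone_pt with (k := (-k)%Z); auto. rewrite opp_IZR. unfold x in *. lra. }
destruct (Rle_lt_dec x (al/2 - PI/12 + al/2)) as [C2|C2].
{ left. apply cone_pt with (k := (-k)%Z); auto. rewrite opp_IZR. unfold x in *. lra. }
destruct (Rle_lt_dec x (PI + al/2)) as [C3|C3].
{ right; right. apply cone_pt with (k := (-k)%Z); auto. rewrite opp_IZR. unfold x in *. lra. }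
right; left. apply cone_pt with (k := (-k + 1)%Z); auto.
rewrite plus_IZR, opp_IZR. unfold x in *. lra.
Qed.
Lemma mono rs Rad : radius_levels rs Rad -> forall j i, (i <= j)%nat -> (j < length rs)%nat ->
  nth i rs 0 <= nth j rs 0.
Proof.
intros [_ [_ [Hinc _]]]. induction j as [|j IH]; intros i Hij Hj.
- assert (i = 0%nat) by lia. subst; lra.
- destruct (Nat.eq_dec i (S j)) as [->|Hne]; [lra|].
  specialize (IH i ltac:(lia) ltac:(lia)). specialize (Hinc j Hj). lra.
Qed.

Lemma le_Rad rs Rad : radius_levels rs Rad -> forall i, (i < length rs)%nat -> nth i rs 0 <= Rad.
Proof.
intros H i Hi. destruct H as [A [B [C D]]] eqn:E. rewrite <- D.
apply (mono rs Rad H); lia.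
Qed.

Lemma cbtc_bound V rs Rad al u i j : radius_levels rs Rad -> (j < length rs)%nat ->
  ~ has_gap al u (ball_nbrs V (nth j rs 0) u) -> cbtc_index V rs al u i ->
  nth i rs 0 <= nth j rs 0.
Proof.
intros HR Hj Hng [Hi [[_ Hpre] | [Hall _]]].
- destruct (Nat.lt_ge_cases j i) as [Hji|Hij].
  + exfalso; apply Hng, Hpre, Hji.
  + apply (mono rs Rad HR); lia.
- exfalso; apply Hng, Hall, Hj.
Qed.

Lemma N_bound V rs Rad al u v : radius_levels rs Rad -> N_alpha V rs al u v -> edist u v <= Rad.
Proof.
intros HR [_ [i [[Hi _] [_ [_ Hd]]]]]. pose proof (le_Rad rs Rad HR i Hi). lra.
Qed.

Lemma edist_sym p q : edist p q = edist q p.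
Proof. unfold edist. f_equal. ring. Qed.

Lemma edist_val p q d : 0 <= d -> (fst p - fst q)^2 + (snd p - snd q)^2 = d^2 -> edist p q = d.
Proof. intros H E. unfold edist. rewrite E. apply sqrt_pow2; auto. Qed.

Lemma crt_sym (E : point -> point -> Prop) : (forall a b, E a b -> E b a) ->
  forall a b, clos_refl_trans point E a b -> clos_refl_trans point E b a.
Proof.
intros Hs a b H; induction H.
- apply rt_step; auto.
- apply rt_refl.
- eapply rt_trans; eauto.
Qed.

Lemma trig_facts al : 5*PI/6 < al < 2*PI ->
  cos (psi al) < 1/2 /\ -1 <= cos (psi al) /\ 0 < sin (psi al) /\ sin (psi al) <= 1 /\
  cos (psi al) * cos (psi al) + sin (psi al) * sin (psi al) = 1.
Proof.
intros [H1 H2]. assert (HP := PI_RGT_0). unfold psi.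
split; [|split; [|split; [|split]]].
- rewrite <- cos_PI3. apply cos_decreasing_1; lra.
- apply COS_bound.
- apply sin_gt_0; lra.
- apply SIN_bound.
- pose proof (sin2_cos2 (al/2 - PI/12)). unfold Rsqr in H. lra.
Qed.

Lemma num c sn : c < 1/2 -> -1 <= c -> 0 < sn -> sn <= 1 -> c*c + sn*sn = 1 ->
  0 < rr c < 1 /\ 0 < ss c < rr c /\ rr c * c < 1/2.
Proof.
intros H1 H2 H3 H4 H5. unfold ss, rr.
assert (0 < 3/4 + c/2 < 1) by lra.
assert (0 < 3/4 + c/2 - 2*c) by lra.
split; [lra|split;[split; nra|destruct (Rle_lt_dec 0 c); nra]].
Qed.

Lemma nogap_u0 al : 5*PI/6 < al < 2*PI ->
  ~ has_gap al (0,0) (ball_nbrs (Ul (cos (psi al)) (sin (psi al)) ++ Wl (cos (psi al)) (sin (psi al))) (rr (cos (psi al))) (0,0)).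
Proof.
intros Hal. destruct (trig_facts al Hal) as [H1 [H2 [H3 [H4 H5]]]].
set (c := cos (psi al)) in *. set (sn := sin (psi al)) in *.
destruct (num c sn H1 H2 H3 H4 H5) as [[R1 R2] [[S1 S2] RC]].
set (r := rr c) in *. set (s := ss c) in *.
intros [th Hth].
destruct (cover (0,0) 0 al r s th ltac:(lra) ltac:(lra) ltac:(lra)) as [H|[H|H]]; simpl in H.
- apply (Hth (r * c, r * sn)).
  + split; [simpl; tauto|split].
    * intro E; inversion E. nra.
    * right. apply edist_val; [lra|]. simpl. nra.
  + rewrite Rplus_0_r in H. fold c sn in H. replace (r*c, r*sn) with (0 + r * c, 0 + r * sn) by (f_equal; ring). exact H.
- apply (Hth (0, - s)).
  + split; [simpl; tauto|split].
    * intro E; inversion E. lra.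
    * left. rewrite (edist_val _ _ s); [lra|lra|simpl; nra].
  + replace (0 - PI/2) with (- (PI/2)) in H by ring.
    rewrite cos_neg, sin_neg, cos_PI2, sin_PI2 in H.
    replace (0, - s) with (0 + s * 0, 0 + s * - (1)) by (f_equal; ring). exact H.
- apply (Hth (- r, 0)).
  + split; [simpl; tauto|split].
    * intro E; inversion E. lra.
    * right. apply edist_val; simpl; nra.
  + replace (0 + PI) with PI in H by ring. rewrite cos_PI, sin_PI in H.
    replace (- r, 0) with (0 + r * -1, 0 + r * 0) by (f_equal; ring). exact H.
Qed.

Lemma nogap_v0 al : 5*PI/6 < al < 2*PI ->
  ~ has_gap al (1,0) (ball_nbrs (Ul (cos (psi al)) (sin (psi al)) ++ Wl (cos (psi al)) (sin (psi al))) (rr (cos (psi al))) (1,0)).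
Proof.
intros Hal. destruct (trig_facts al Hal) as [H1 [H2 [H3 [H4 H5]]]].
set (c := cos (psi al)) in *. set (sn := sin (psi al)) in *.
destruct (num c sn H1 H2 H3 H4 H5) as [[R1 R2] [[S1 S2] RC]].
set (r := rr c) in *. set (s := ss c) in *.
intros [th Hth].
destruct (cover (1,0) PI al r s th ltac:(lra) ltac:(lra) ltac:(lra)) as [H|[H|H]]; simpl in H.
- apply (Hth (1 - r * c, - (r * sn))).
  + split; [simpl; tauto|split].
    * intro E; inversion E. nra.
    * right. apply edist_val; [lra|]. simpl. nra.
  + rewrite neg_cos, neg_sin in H. fold c sn in H.
    replace (1 - r*c, - (r*sn)) with (1 + r * - c, 0 + r * - sn) by (f_equal; ring). exact H.
- apply (Hth (1, s)).
  + split; [simpl; tauto|split].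
    * intro E; inversion E. lra.
    * left. rewrite (edist_val _ _ s); [lra|lra|simpl; nra].
  + replace (PI - PI/2) with (PI/2) in H by field.
    rewrite cos_PI2, sin_PI2 in H.
    replace (1, s) with (1 + s * 0, 0 + s * 1) by (f_equal; ring). exact H.
- apply (Hth (1 + r, 0)).
  + split; [simpl; tauto|split].
    * intro E; inversion E. lra.
    * right. apply edist_val; simpl; nra.
  + replace (PI + PI) with (2 * PI) in H by ring. rewrite cos_2PI, sin_2PI in H.
    replace (1 + r, 0) with (1 + r * 1, 0 + r * 0) by (f_equal; ring). exact H.
Qed.

Theorem theorem2 :
  forall alpha : R, 5 * PI / 6 < alpha < 2 * PI ->
  exists (Rad : R) (V : list point),
    0 < Rad /\ NoDup V /\
    forall rs : list R,
      radius_levels rs Rad ->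
      (forall u v, In u V -> In v V -> u <> v -> edist u v <= Rad -> In (edist u v) rs) ->
      connected_on V (E_R V Rad) /\ ~ connected_on V (E_alpha V rs alpha).
Proof.
intros al Hal. assert (HP := PI_RGT_0).
pose proof (nogap_u0 al Hal) as NGu. pose proof (nogap_v0 al Hal) as NGv.
pose proof (cross (cos (psi al)) (sin (psi al))) as CR.
destruct (trig_facts al Hal) as [H1 [H2 [H3 [H4 H5]]]].
set (c := cos (psi al)) in *. set (sn := sin (psi al)) in *.
specialize (CR H1 H2 H3 H4 H5).
destruct (num c sn H1 H2 H3 H4 H5) as [[R1 R2] [[S1 S2] RC]].
set (U := Ul c sn) in *. set (W := Wl c sn) in *.
set (r := rr c) in *. set (s := ss c) in *.
exists 1, (U ++ W). split; [lra|split].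
{ unfold U, W, Ul, Wl. fold r s. simpl.
  repeat constructor; simpl; intro H; repeat destruct H as [H|H]; try contradiction;
  inversion H; nra. }
intros rs HR Hin.
assert (Du1 : edist (0,0) (r*c, r*sn) = r) by (apply edist_val; [lra|simpl; nra]).
assert (Dv1 : edist (1,0) (1 - r*c, -(r*sn)) = r) by (apply edist_val; [lra|simpl; nra]).
assert (Hrin : In r rs).
{ rewrite <- Du1. apply Hin; [simpl; tauto|simpl; tauto| intro E; inversion E; nra | lra]. }
destruct (In_nth rs r 0 Hrin) as [j [Hj Hnj]].
rewrite <- Hnj in NGu, NGv.
split.
- assert (Hsym : forall a b, E_R (U ++ W) 1 a b -> E_R (U ++ W) 1 b a).
  { unfold E_R. intros a b [A [B [C D]]]. rewrite edist_sym. auto. }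
  assert (Hu0 : forall x, In x (U ++ W) -> clos_refl_trans point (E_R (U ++ W) 1) (0,0) x).
  { assert (E0 : E_R (U ++ W) 1 (0,0) (1,0)).
    { split; [simpl; tauto|split; [simpl; tauto|split; [intro E; inversion E; lra|]]].
      rewrite (edist_val _ _ 1); [lra|lra|simpl; nra]. }
    intros x Hx. unfold U, W, Ul, Wl in Hx. fold r s in Hx. simpl in Hx.
    repeat destruct Hx as [<-|Hx]; try contradiction.
    + apply rt_refl.
    + apply rt_step. split; [simpl; tauto|split; [simpl; tauto|split; [intro E; inversion E; nra|]]].
      rewrite (edist_val _ _ r); [lra|lra|simpl; nra].
    + apply rt_step. split; [simpl; tauto|split; [simpl; tauto|split; [intro E; inversion E; nra|]]].
      rewrite (edist_val _ _ s); [lra|lra|simpl; nra].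
    + apply rt_step. split; [simpl; tauto|split; [simpl; tauto|split; [intro E; inversion E; nra|]]].
      rewrite (edist_val _ _ r); [lra|lra|simpl; nra].
    + apply rt_step; exact E0.
    + apply rt_trans with (1,0); [apply rt_step; exact E0|apply rt_step].
      split; [simpl; tauto|split; [simpl; tauto|split; [intro E; inversion E; nra|]]].
      rewrite (edist_val _ _ r); [lra|lra|simpl; nra].
    + apply rt_trans with (1,0); [apply rt_step; exact E0|apply rt_step].
      split; [simpl; tauto|split; [simpl; tauto|split; [intro E; inversion E; nra|]]].
      rewrite (edist_val _ _ s); [lra|lra|simpl; nra].
    + apply rt_trans with (1,0); [apply rt_step; exact E0|apply rt_step].
      split; [simpl; tauto|split; [simpl; tauto|split; [intro E; inversion E; nra|]]].
      rewrite (edist_val _ _ r); [lra|lra|simpl; nra]. }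
  intros u v Hu Hv. apply rt_trans with (0,0).
  + apply crt_sym; auto.
  + apply Hu0; auto.
- assert (Hcross : forall x y, In x U -> In y W ->
     ~ N_alpha (U ++ W) rs al x y /\ ~ N_alpha (U ++ W) rs al y x).
  { intros x y Hx Hy. destruct (CR x y Hx Hy) as [[-> ->]|Hd].
    - assert (D01 : edist (0,0) (1,0) = 1) by (apply edist_val; [lra|simpl; nra]).
      split; intros [_ [i [Hci [_ [_ Hd]]]]].
      + pose proof (cbtc_bound _ rs 1 al _ i j HR Hj NGu Hci). lra.
      + pose proof (cbtc_bound _ rs 1 al _ i j HR Hj NGv Hci). rewrite edist_sym in Hd. lra.
    - split; intro HN; apply (N_bound _ rs 1) in HN; auto; [lra|rewrite edist_sym in HN; lra]. }
  assert (Inv : forall a b, clos_refl_trans point (E_alpha (U ++ W) rs al) a b -> In a U -> In b U).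
  { intros a b H; induction H as [a b H|a|a b d _ IH1 _ IH2]; intros Ha; auto.
    assert (Hb : In b (U ++ W)).
    { destruct H as [[_ [i [_ [Hb _]]]]|[Hb _]]; auto. }
    apply in_app_or in Hb as [Hb|Hb]; auto. exfalso.
    destruct (Hcross a b Ha Hb) as [A B]. destruct H; auto. }
  intro Hc. assert (HU : In (1,0) U).
  { apply (Inv (0,0)); [apply Hc; simpl; tauto | simpl; tauto]. }
  unfold U, Ul in HU. simpl in HU. fold r s in HU.
  repeat destruct HU as [HU|HU]; try contradiction; inversion HU; nra.
Qed.
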